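(* Let $\Sigma$ be a language consisting only of constant symbols, and let $\mathcal{T}_\Sigma$ be the family of all complete theories in $\Sigma$. If $\Sigma$ consists of $n\in\omega$ symbols, then ${\rm RS}(\mathcal{T}_\Sigma)=1$ and ${\rm ds}(\mathcal{T}_\Sigma)=P(n)$, where $P(n)$ is the number of partitions of an $n$-element set. If $\Sigma$ has infinitely many symbols, then ${\rm RS}(\mathcal{T}_\Sigma)=\infty$.
   Context: Theories are complete consistent first-order theories; structures have nonempty universes. $\mathcal{T}_\Sigma$ is the family of complete theories of all $\Sigma$-structures, where each constant symbol $c$ may be regarded as a unary predicate $R_c$ interpreted as $\{c\}$. For a family $\mathcal{T}$ of theories and a sentence $\varphi$ of its language, $\mathcal{T}_\varphi=\{T\in\mathcal{T}\mid\varphi\in T\}$. The rank ${\rm RS}$ of a family is defined as follows: ${\rm RS}(\emptyset)=-1$; ${\rm RS}(\mathcal{T})=0$ for finite nonempty $\mathcal{T}$; ${\rm RS}(\mathcal{T})\ge 1$ for infinite $\mathcal{T}$; for $\alpha=\beta+1$, ${\rm RS}(\mathcal{T})\ge\alpha$ iff there are pairwise inconsistent sentences $\varphi_n$, $n\in\omega$, of the language of $\mathcal{T}$ with ${\rm RS}(\mathcal{T}_{\varphi_n})\ge\beta$ for all $n$; for limit $\alpha$, ${\rm RS}(\mathcal{T})\ge\alpha$ iff ${\rm RS}(\mathcal{T})\ge\beta$ for all $\beta<\alpha$; ${\rm RS}(\mathcal{T})=\alpha$ iff ${\rm RS}(\mathcal{T})\ge\alpha$ and not ${\rm RS}(\mathcal{T})\ge\alpha+1$;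 ${\rm RS}(\mathcal{T})=\infty$ if ${\rm RS}(\mathcal{T})\ge\alpha$ for every ordinal $\alpha$. If ${\rm RS}(\mathcal{T})=\alpha$ is an ordinal $\ge0$, the degree ${\rm ds}(\mathcal{T})$ is the maximal number of pairwise inconsistent sentences $\varphi_i$ with ${\rm RS}(\mathcal{T}_{\varphi_i})=\alpha$. *)

(* Defs.v *)
From mathcomp Require Import all_boot.
From Stdlib Require List.

Set Implicit Arguments.
Unset Strict Implicit.
Unset Printing Implicit Defensive.

Inductive term (C : Type) : Type :=
| TVar : nat -> term C
| TConst : C -> term C.

Inductive form (C : Type) : Type :=
| FEq  : term C -> term C -> form C
| FNeg : form C -> form C
| FAnd : form C -> form C -> form C
| FEx  : nat -> form C -> form C.

Arguments TVar {C}.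
Arguments FEq {C}.
Arguments FNeg {C}.
Arguments FAnd {C}.
Arguments FEx {C}.

Definition fv_term (C : Type) (t : term C) : seq nat :=
  match t with TVar x => [:: x] | TConst _ => [::] end.

Fixpoint fv (C : Type) (f : form C) : seq nat :=
  match f with
  | FEq t1 t2 => fv_term t1 ++ fv_term t2
  | FNeg g => fv g
  | FAnd g h => fv g ++ fv h
  | FEx x g => filter (fun y => y != x) (fv g)
  end.

Definition sentence (C : Type) (f : form C) : Prop := fv f = [::].

(* Sigma-structures: nonempty universe + interpretation of the constants *)
Record structure (C : Type) : Type := Structure {
  carrier :> Type;
  some_elt : carrier;
  interp : C -> carrier
}.

Definition upd (M : Type) (a : nat -> M) (x : nat) (m : M) : nat -> M :=
  fun y => if y == x then m else a y.

Definition eval_term (C : Type) (M : structure C) (a : nat -> M) (t : term C)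
  : M :=
  match t with TVar x => a x | TConst c => interp M c end.

Fixpoint holds (C : Type) (M : structure C) (a : nat -> M) (f : form C)
  : Prop :=
  match f with
  | FEq t1 t2 => eval_term a t1 = eval_term a t2
  | FNeg g => ~ holds a g
  | FAnd g h => holds a g /\ holds a h
  | FEx x g => exists m : M, holds (upd a x m) g
  end.

(* M |= f  (for sentences this does not depend on the assignment) *)
Definition models (C : Type) (M : structure C) (f : form C) : Prop :=
  forall a : nat -> M, holds a f.

Definition theory (C : Type) := form C -> Prop.
Definition family (C : Type) := theory C -> Prop.

Definition Th (C : Type) (M : structure C) : theory C :=
  fun f => sentence f /\ models M f.

Definition T_Sigma (C : Type) : family C :=
  fun T => exists M : structure C, T = Th M.

Definition subfam (C : Type) (fam : family C) (phi : form C) : family C :=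
  fun T => fam T /\ T phi.

Definition fam_nonempty (C : Type) (fam : family C) : Prop :=
  exists T, fam T.

Definition fam_finite (C : Type) (fam : family C) : Prop :=
  exists l : list (theory C), forall T, fam T -> List.In T l.

Definition inconsistent2 (C : Type) (phi psi : form C) : Prop :=
  forall M : structure C, ~ (models M phi /\ models M psi).

(* Ordinals, represented as elements of well-ordered types.           *)

Definition well_order (A : Type) (lt : A -> A -> Prop) : Prop :=
  well_founded lt /\
  (forall x y z, lt x y -> lt y z -> lt x z) /\
  (forall x y, lt x y \/ x = y \/ lt y x).

Definition ord_is_zero (A : Type) (lt : A -> A -> Prop) (a : A) : Prop :=
  forall b, ~ lt b a.

Definition ord_is_succ (A : Type) (lt : A -> A -> Prop) (b a : A) : Prop :=
  lt b a /\ ~ (exists c, lt b c /\ lt c a).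

Definition ord_is_one (A : Type) (lt : A -> A -> Prop) (a : A) : Prop :=
  exists b, ord_is_zero lt b /\ ord_is_succ lt b a.

Definition ord_is_limit (A : Type) (lt : A -> A -> Prop) (a : A) : Prop :=
  ~ ord_is_zero lt a /\ ~ (exists b, ord_is_succ lt b a).

(* RSge lt a fam  <->  RS(fam) >= a   (for a in a well-ordered type);
   inductive definition following the clauses of the definition of RS:
   RS >= 0 iff nonempty (RS(empty) = -1, finite nonempty has RS 0),
   RS >= 1 iff infinite,
   RS >= b+1 (b >= 1) iff there are pairwise inconsistent sentences phi_n
       with RS(fam_{phi_n}) >= b for all n,
   RS >= a (a limit) iff RS >= b for all b < a. *)
Inductive RSge (C A : Type) (lt : A -> A -> Prop) : A -> family C -> Prop :=
| RSge_zero a fam :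
    ord_is_zero lt a -> fam_nonempty fam -> RSge lt a fam
| RSge_one a fam :
    ord_is_one lt a -> ~ fam_finite fam -> RSge lt a fam
| RSge_succ a b fam :
    ord_is_succ lt b a -> ~ ord_is_zero lt b ->
    (exists phi : nat -> form C,
        (forall n, sentence (phi n)) /\
        (forall n m, n <> m -> inconsistent2 (phi n) (phi m)) /\
        (forall n, RSge lt b (subfam fam (phi n)))) ->
    RSge lt a fam
| RSge_lim a fam :
    ord_is_limit lt a -> (forall b, lt b a -> RSge lt b fam) -> RSge lt a fam.

(* RS(fam) >= k for a finite ordinal k (ordinals < omega are the naturals) *)
Definition RSge_nat (C : Type) (k : nat) (fam : family C) : Prop :=
  RSge (fun m n : nat => (m < n)%N) k fam.

Definition RS_eq_nat (C : Type) (k : nat) (fam : family C) : Prop :=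
  RSge_nat k fam /\ ~ RSge_nat k.+1 fam.

Definition RS_infty (C : Type) (fam : family C) : Prop :=
  forall (A : Type) (lt : A -> A -> Prop), well_order lt ->
    forall a : A, RSge lt a fam.

Definition ds_eq_nat (C : Type) (k : nat) (fam : family C) (d : nat) : Prop :=
  (exists phi : 'I_d -> form C,
      (forall i, sentence (phi i)) /\
      (forall i j, i <> j -> inconsistent2 (phi i) (phi j)) /\
      (forall i, RS_eq_nat k (subfam fam (phi i)))) /\
  (forall (m : nat) (phi : 'I_m -> form C),
      (forall i, sentence (phi i)) ->
      (forall i j, i <> j -> inconsistent2 (phi i) (phi j)) ->
      (forall i, RS_eq_nat k (subfam fam (phi i))) ->
      (m <= d)%N).

Definition num_partitions (n : nat) : nat :=
  #|[set P : {set {set 'I_n}} | partition P [set: 'I_n]]|.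

(* Main.v *)
Require Import Defs.
From mathcomp Require Import all_boot.
From Stdlib Require List.
From mathcomp Require Import zify.
From Stdlib Require Import Lia Classical ClassicalEpsilon FunctionalExtensionality PropExtensionality.

Set Implicit Arguments.
Unset Strict Implicit.
Unset Printing Implicit Defensive.

Lemma InE (T : eqType) (x : T) (s : seq T) : List.In x s <-> x \in s.
Proof.
elim: s => [|y s IH] /=; first by split.
rewrite inE; split.
- by case=> [->|/IH ->]; rewrite ?eqxx ?orbT.
- by case/orP=> [/eqP->|/IH]; [left|right].
Qed.

Lemma In_map (A B : Type) (f : A -> B) (s : seq A) y :
  List.In y (map f s) <-> exists x, List.In x s /\ y = f x.
Proof.
elim: s => [|x s IH] /=; first by split=> // [[x []]].
split.
- case=> [<-|H]; first by exists x; split; [left|].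
  case/IH: H => z [Hz ->]. by exists z; split; [right|].
- case=> z [[<-|Hz] E]; [by left; rewrite E|right; apply/IH; by exists z].
Qed.

Lemma size_length (A : Type) (s : seq A) : size s = length s.
Proof. by elim: s => //= x s ->. Qed.

Section Gen.
Variable C : Type.

Definition FT : form C := FEx 0 (FEq (TVar 0) (TVar 0)).
Lemma FT_sentence : sentence FT. Proof. by []. Qed.
Lemma holds_FT (M : structure C) (a : nat -> M) : holds a FT.
Proof. by exists (a 0). Qed.

Definition bigand (l : seq (form C)) := foldr FAnd FT l.

Lemma holds_bigand (M : structure C) (a : nat -> M) l :
  holds a (bigand l) <-> (forall f, List.In f l -> holds a f).
Proof.
elim: l => [|f l IH] /=; first by split=> // _; apply: holds_FT.
split.
- by case=> Hf /IH Hl g [<-|Hg] //; apply: Hl.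
- by move=> H; split; [apply: H; left | apply/IH => g Hg; apply: H; right].
Qed.

Lemma fv_bigand l : (forall f, List.In f l -> fv f = [::]) -> fv (bigand l) = [::].
Proof.
elim: l => [|f l IH] //= H.
by rewrite H; [rewrite IH // => g Hg; apply: H; right | left].
Qed.

Fixpoint occurs (c : C) (f : form C) : Prop :=
  match f with
  | FEq t1 t2 => t1 = TConst c \/ t2 = TConst c
  | FNeg g => occurs c g
  | FAnd g h => occurs c g \/ occurs c h
  | FEx _ g => occurs c g
  end.

Lemma occurs_bigand c l : occurs c (bigand l) -> exists f, List.In f l /\ occurs c f.
Proof.
elim: l => [|f l IH] /=; first by case.
case=> [H|/IH [g [Hg Hc]]]; first by exists f; split; [left|].
by exists g; split; [right|].
Qed.

Lemma holds_ext_interp (X : Type) (x0 x1 : X) (i1 i2 : C -> X) f (a : nat -> X) :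
  (forall c, occurs c f -> i1 c = i2 c) ->
  (@holds C (@Structure C X x0 i1) a f <-> @holds C (@Structure C X x1 i2) a f).
Proof.
elim: f a => [t1 t2|g IH|g IHg h IHh|x g IH] a /= H.
- have E : forall t, (t = TConst _ -> False) \/ True -> True by [].
  case: t1 H => [y1|c1] H; case: t2 H => [y2|c2] H /=;
  rewrite ?(H c1) ?(H c2) //; by [left|right].
- by rewrite (IH a H).
- by rewrite (IHg a (fun c Hc => H c (or_introl Hc))) (IHh a (fun c Hc => H c (or_intror Hc))).
- by split=> [[m Hm]|[m Hm]]; exists m; [rewrite -IH | rewrite IH].
Qed.

Lemma sentence_and (f g : form C) : sentence (FAnd f g) <-> sentence f /\ sentence g.
Proof.
rewrite /sentence /=; split; last by case=> -> ->.
by case: (fv f) => //; case: (fv g).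
Qed.

Lemma Th_and (M : structure C) f g : Th M (FAnd f g) <-> Th M f /\ Th M g.
Proof.
rewrite /Th sentence_and /models /=; split.
- by case=> [[Sf Sg] H]; split; split=> // a; case: (H a).
- by case=> [[Sf Hf] [Sg Hg]]; split=> // a; split.
Qed.

Lemma not_finite_of_inj (F : theory C -> Prop) (f : nat -> theory C) :
  (forall k, F (f k)) -> (forall k l, (k < l)%N -> f k <> f l) -> ~ fam_finite F.
Proof.
move=> HF Hinj [l Hl].
suff: forall (l : list (theory C)) (f : nat -> theory C),
    (forall k l, (k < l)%N -> f k <> f l) -> ~ (forall k, List.In (f k) l).
  by move=> H; apply: (H l f Hinj) => k; apply: Hl.
clear.
have Hinj' : forall (f : nat -> theory C), (forall k l, (k < l)%N -> f k <> f l) ->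
   forall k l, k <> l -> f k <> f l.
  move=> g Hg k m /eqP; case: ltngtP => // H _; first by apply: Hg.
  by move=> E; apply: (Hg _ _ H); rewrite E.
elim=> [|T l IH] f Hf Hin; first by apply: (Hin 0).
case: (classic (exists k0, f k0 = T)) => [[k0 Hk0]|Hno].
- pose f' k := f (if (k < k0)%N then k else k.+1).
  apply: (IH f').
    move=> k m Hkm; rewrite /f'; apply: Hf.
    by case: ifP; case: ifP => //; lia.
  move=> k; case: (Hin (if (k < k0)%N then k else k.+1)) => // E.
  exfalso; apply: (Hinj' f Hf (if (k < k0)%N then k else k.+1) k0).
    by case: ifP => //; lia.
  by rewrite -E Hk0.
- apply: (IH f Hf) => k; case: (Hin k) => // E.
  by exfalso; apply: Hno; exists k.
Qed.

End Gen.

Unset Implicit Arguments.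


Unset Strict Implicit.
Unset Printing Implicit Defensive.

Section Inf.
Variable C : Type.
Hypothesis Cinf : ~ (exists l : list C, forall c : C, List.In c l).

Lemma fresh_ex (l : list C) : exists c, ~ List.In c l.
Proof. apply: NNPP => H; apply: Cinf; exists l => c; apply: NNPP => Hc; apply: H; by exists c. Qed.

Definition hfr (l : list C) : C := proj1_sig (constructive_indefinite_description _ (fresh_ex l)).
Lemma hfr_fresh l : ~ List.In (hfr l) l.
Proof. exact: (proj2_sig (constructive_indefinite_description _ (fresh_ex l))). Qed.

Fixpoint Lpre (k : nat) : list C := match k with 0 => [::] | k'.+1 => hfr (Lpre k') :: Lpre k' end.
Definition e (k : nat) : C := hfr (Lpre k).

Lemma e_in k m : (k < m)%N -> List.In (e k) (Lpre m).
Proof.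
elim: m => // m IH; rewrite ltnS leq_eqVlt => /orP [/eqP->|H] /=; first by left.
by right; apply: IH.
Qed.

Lemma e_inj : injective e.
Proof.
move=> k m E; case: (ltngtP k m) => // H.
- by have := hfr_fresh (Lpre m); rewrite -/(e m) -E; case; apply: e_in.
- by have := hfr_fresh (Lpre k); rewrite -/(e k) E; case; apply: e_in.
Qed.

Definition ov (i : C -> nat) (N : nat) (g : nat -> nat) : C -> nat := fun c =>
  match excluded_middle_informative (exists j, (N <= j)%N /\ c = e j) with
  | left H => g (proj1_sig (constructive_indefinite_description _ H))
  | right _ => i c
  end.

Lemma ov_e i N g j : (N <= j)%N -> ov i N g (e j) = g j.
Proof.
move=> Hj; rewrite /ov; case: excluded_middle_informative => [H|H].
- case: constructive_indefinite_description => j' [_ Hj'] /=; by rewrite (e_inj _ _ Hj').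
- by exfalso; apply: H; exists j.
Qed.

Lemma ov_lt i N g k : (k < N)%N -> ov i N g (e k) = i (e k).
Proof.
move=> Hk; rewrite /ov; case: excluded_middle_informative => [[j [Hj E]]|//].
by move: (e_inj _ _ E) => Ekj; lia.
Qed.

Definition Inv N (psi : form C) :=
  sentence psi /\ (forall c, occurs c psi -> exists k, (k < N)%N /\ c = e k) /\
  exists i : C -> nat, models (@Structure C nat 0 i) psi.

Lemma Inv_model N psi : Inv N psi -> exists i, forall g, models (@Structure C nat 0 (ov i N g)) psi.
Proof.
case=> _ [Hocc [i Hi]]; exists i => g a.
apply/(@holds_ext_interp C nat 0 0 i (ov i N g) psi a); last exact: Hi.
by move=> c /Hocc [k [Hk ->]]; rewrite ov_lt.
Qed.

Definition Kfam (F : theory C -> Prop) :=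
  exists N psi, Inv N psi /\ forall T, F T <-> T_Sigma T /\ T psi.

Definition Eq_e i j : form C := FEq (TConst (e i)) (TConst (e j)).

Definition phiK N k : form C :=
  FAnd (Eq_e N (N + 1 + k)) (bigand [seq FNeg (Eq_e N (N + 1 + j)) | j <- iota 0 k]).

Lemma holds_phiK (M : structure C) (a : nat -> M) N k :
  holds a (phiK N k) <-> interp M (e N) = interp M (e (N + 1 + k)) /\
     forall j, (j < k)%N -> interp M (e N) <> interp M (e (N + 1 + j)).
Proof.
rewrite /phiK /= holds_bigand; split.
- case=> H1 H2; split=> // j Hj; apply: (H2 (FNeg (Eq_e N (N + 1 + j)))).
  by apply/In_map; exists j; split=> //; apply/InE; rewrite mem_iota.
- case=> H1 H2; split=> // f /In_map [j [/InE Hj ->]].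
  by apply: H2; move: Hj; rewrite mem_iota.
Qed.

Lemma models_phiK (M : structure C) N k :
  models M (phiK N k) <-> interp M (e N) = interp M (e (N + 1 + k)) /\
     forall j, (j < k)%N -> interp M (e N) <> interp M (e (N + 1 + j)).
Proof.
split; first by move=> H; apply/(holds_phiK M (fun _ => some_elt M)); apply: H.
by move=> H a; apply/holds_phiK.
Qed.

Lemma phiK_sentence N k : sentence (phiK N k).
Proof.
rewrite /sentence /= fv_bigand // => f /In_map [j [_ ->]] //.
Qed.

Lemma phiK_occ N k c : occurs c (phiK N k) -> exists j, (j <= N + 1 + k)%N /\ c = e j.
Proof.
case=> [[]|H].
- by case=> <-; exists N; split=> //; lia.
- by case=> <-; exists (N + 1 + k); split.
- have [f [Hf Hc]] := occurs_bigand H.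
  have [j [Hj Ef]] := proj1 (In_map _ _ _) Hf.
  move/InE: Hj; subst f; rewrite mem_iota /= => Hj.
  move: Hc; case; case=> <-.
  + by exists N; split=> //; lia.
  + by exists (N + 1 + j); split=> //; lia.
Qed.

Lemma phiK_incons N k l : k <> l -> inconsistent2 (phiK N k) (phiK N l).
Proof.
move=> Hkl M [/models_phiK [Ek Hk] /models_phiK [El Hl]].
case: (ltngtP k l) => H.
- by apply: (Hl k H).
- by apply: (Hk l H).
- by apply: Hkl.
Qed.

Lemma Inv_step N psi k : Inv N psi -> Inv (N + k + 2) (FAnd psi (phiK N k)).
Proof.
move=> Hinv; have [i Hi] := Inv_model _ _ Hinv; case: Hinv => Hs [Hocc _].
split; first by apply/sentence_and; split=> //; apply: phiK_sentence.
split.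
- move=> c [/Hocc [j [Hj ->]]|/phiK_occ [j [Hj ->]]]; exists j; split=> //; lia.
- pose g j := if (j == N) || (j == N + 1 + k) then 0 else 1.
  exists (ov i N g) => a; split; first by apply: Hi.
  apply/holds_phiK => /=; rewrite !ov_e; try lia.
  rewrite /g eqxx /= eqxx orbT; split=> // j Hj.
  rewrite ov_e; last by lia.
  have -> : (N + 1 + j == N) || (N + 1 + j == N + 1 + k) = false by apply/negbTE; lia.
  by [].
Qed.

Lemma Kfam_sub F N k : (exists psi, Inv N psi /\ forall T, F T <-> T_Sigma T /\ T psi) ->
  Kfam (subfam F (phiK N k)).
Proof.
case=> psi [Hinv HF]; exists (N + k + 2), (FAnd psi (phiK N k)); split; first exact: Inv_step.
move=> T; rewrite /subfam HF; split.
- case=> [[[M ->] H1] H2]; split; [by exists M | by apply/Th_and].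
- case=> [[M ->]] /Th_and [H1 H2]; split=> //; split=> //; by exists M.
Qed.

Lemma Kfam_nonempty F : Kfam F -> fam_nonempty F.
Proof.
case=> N [psi [[Hs [_ [i Hi]]] HF]]; exists (Th (@Structure C nat 0 i)).
by apply/HF; split; [exists (@Structure C nat 0 i) | split].
Qed.

Lemma Kfam_infinite F : Kfam F -> ~ fam_finite F.
Proof.
case=> N [psi [Hinv HF]]; have [i Hi] := Inv_model _ _ Hinv.
pose gk k j := if (j <= N + k)%N then 0 else 1.
pose f k := Th (@Structure C nat 0 (ov i N (gk k))).
apply: (not_finite_of_inj (f := f)).
  move=> k; apply/HF; split; first by eexists.
  by split; [case: Hinv | apply: Hi].
move=> k l Hkl E.
have : f l (Eq_e N (N + 1 + k)).
  split=> // a /=; rewrite !ov_e; try lia.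
  by rewrite /gk; case: ifP; case: ifP => //; lia.
rewrite -E; case=> _ /(_ (fun _ => 0)) /=; rewrite !ov_e; try lia.
by rewrite /gk; case: ifP; case: ifP => //; lia.
Qed.

Lemma Kfam_RSge (A : Type) (lt : A -> A -> Prop) : well_founded lt ->
  forall a F, Kfam F -> RSge lt a F.
Proof.
move=> wf a; elim/(well_founded_ind wf): a => a IH F KF.
case: (classic (ord_is_zero lt a)) => Hz.
  by apply: RSge_zero => //; apply: Kfam_nonempty.
case: (classic (exists b, ord_is_succ lt b a)) => [[b Hb]|Hns].
  case: (classic (ord_is_zero lt b)) => Hbz.
    by apply: RSge_one; [exists b | apply: Kfam_infinite].
  case: (KF) => N [psi [Hinv HF]].
  apply: (RSge_succ Hb Hbz); exists (phiK N); split; first exact: phiK_sentence.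
  split; first exact: phiK_incons.
  move=> k; apply: (IH b (proj1 Hb)); apply: Kfam_sub; by exists psi.
apply: RSge_lim; first by split.
by move=> b Hb; apply: IH.
Qed.

Lemma part2 : RS_infty (@T_Sigma C).
Proof.
move=> A lt [wf _] a; apply: Kfam_RSge => //.
exists 0, (FT C); split.
  split; first exact: FT_sentence.
  split; first by move=> c [[]|[]].
  by exists (fun _ => 0) => b; apply: holds_FT.
move=> T; split; last by case.
case=> M ->; split; first by exists M.
by split; [apply: FT_sentence | move=> b; apply: holds_FT].
Qed.

End Inf.

Unset Strict Implicit.
Unset Printing Implicit Defensive.

Lemma In_cat (A : Type) (x : A) (s1 s2 : seq A) :
  List.In x (s1 ++ s2) <-> List.In x s1 \/ List.In x s2.
Proof.
elim: s1 => [|y s1 IH] /=; first by split; [right|case].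
rewrite IH; tauto.
Qed.

Lemma In_flatten (A : Type) (x : A) (ss : seq (seq A)) :
  List.In x (flatten ss) <-> exists s, List.In s ss /\ List.In x s.
Proof.
elim: ss => [|s ss IH] /=; first by split=> // [[s []]].
rewrite In_cat IH; split.
- by case=> [H|[s' [H1 H2]]]; [exists s; split; [left|] | exists s'; split; [right|]].
- by case=> s' [[<-|H1] H2]; [left | right; exists s'].
Qed.

Lemma nth_List (A : Type) (d : A) (s : seq A) i : List.nth i s d = nth d s i.
Proof. by elim: s i => [|x s IH] [|i] //=. Qed.

Lemma NoDup_uniq (T : eqType) (s : seq T) : List.NoDup s <-> uniq s.
Proof.
elim: s => [|x s IH] /=; first by split=> // _; constructor.
rewrite List.NoDup_cons_iff IH InE; split.
- by case=> H1 H2; rewrite H2 andbT; apply/negP.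
- by case/andP=> /negP H1 H2.
Qed.

Lemma In_take (A : Type) (x : A) j (s : seq A) : List.In x (take j s) -> List.In x s.
Proof. elim: s j => [|y s IH] [|j] //= [->|H]; [by left | by right; apply: (IH j)]. Qed.

Lemma NoDup_take (A : Type) j (s : seq A) : List.NoDup s -> List.NoDup (take j s).
Proof.
elim: s j => [|y s IH] [|j] //=; try by constructor.
move/List.NoDup_cons_iff=> [H1 H2]; apply/List.NoDup_cons_iff; split; last by apply: IH.
by move=> H; apply: H1; exact: (In_take _ _ j s H).
Qed.

Lemma NoDup_map_in (A B : Type) (f : A -> B) (s : seq A) :
  List.NoDup s -> (forall x y, List.In x s -> List.In y s -> f x = f y -> x = y) ->
  List.NoDup (map f s).
Proof.
elim: s => [|x s IH] /=; first by constructor.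
move/List.NoDup_cons_iff=> [H1 H2] Hf; apply/List.NoDup_cons_iff; split.
- move/In_map=> [y [Hy E]]; apply: H1; rewrite (Hf x y) //; by [left|right].
- apply: IH => // u v Hu Hv; apply: Hf; by right.
Qed.

Definition size_ge (X : Type) (k : nat) := exists L : seq X, size L = k /\ List.NoDup L.

Lemma size_ge_le (X : Type) k j : size_ge X k -> (j <= k)%N -> size_ge X j.
Proof.
case=> L [HL HN] Hj; exists (take j L); split; last exact: NoDup_take.
by rewrite size_takel // HL.
Qed.

Lemma size_ge0 (X : Type) : size_ge X 0.
Proof. by exists [::]; split=> //; constructor. Qed.

Lemma size_ge_fin (F : finType) k : size_ge F k <-> (k <= #|F|)%N.
Proof.
split.
- case=> L [<- /NoDup_uniq HU]; move/card_uniqP: HU => <-; exact: max_card.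
- move=> Hk; exists (take k (enum F)); split.
  + by rewrite size_takel // -cardE.
  + by apply/NoDup_uniq; rewrite take_uniq // enum_uniq.
Qed.

Lemma pigeon (X : Type) (L L' : seq X) : List.NoDup L -> (size L' < size L)%N ->
  exists x, List.In x L /\ ~ List.In x L'.
Proof.
move=> HN Hs; apply: NNPP => H.
have Hincl : List.incl L L'.
  move=> x Hx; apply: NNPP => Hx'; apply: H; by exists x.
have := List.NoDup_incl_length HN Hincl; rewrite -!size_length; lia.
Qed.

Lemma dedup (X A : Type) (v : A -> X) (L : seq A) : exists D,
  (size D <= size L)%N /\ (forall t, List.In t D -> List.In t L) /\ List.NoDup (map v D) /\
  (forall t, List.In t L -> exists r, List.In r D /\ v t = v r).
Proof.
elim: L => [|t L [D [H1 [H2 [H3 H4]]]]].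
  by exists [::]; split=> //; split=> //; split; [constructor|].
case: (classic (exists r, List.In r D /\ v t = v r)) => [Hex|Hno].
- exists D; split; first by rewrite /=; lia.
  split; first by move=> u /H2 Hu; right.
  split=> // u /= [<-|/H4] //.
- exists (t :: D); split; first by rewrite /=; lia.
  split; first by move=> u /= [->|/H2 Hu]; [left|right].
  split.
  + apply/List.NoDup_cons_iff; split=> //.
    move/In_map=> [r [Hr E]]; apply: Hno; by exists r.
  + move=> u /= [<-|/H4 [r [Hr E]]]; first by exists t; split=> //; left.
    by exists r; split=> //; right.
Qed.

Unset Strict Implicit.
Unset Printing Implicit Defensive.

Section EF.
Variable n : nat.
Notation C := 'I_n.

Definition term_ok (V : seq nat) (t : term C) : bool :=
  match t with TVar y => y \in V | TConst _ => true end.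

Definition ts (V : seq nat) : seq (term C) := map (fun y => TVar y) V ++ map (fun c => TConst c) (enum 'I_n).

Lemma size_ts V : size (ts V) = size V + n.
Proof. by rewrite size_cat !size_map -enumT size_enum_ord. Qed.

Lemma In_ts V t : List.In t (ts V) <-> term_ok V t.
Proof.
rewrite In_cat; split.
- case=> /In_map [x [Hx ->]] //=; exact/InE.
- case: t => [y|c] /= H; [left|right]; apply/In_map; [exists y | exists c]; split=> //;
  apply/InE; by rewrite ?mem_enum.
Qed.

Definition good (M N : structure C) V (a : nat -> M) (b : nat -> N) :=
  forall t1 t2, term_ok V t1 -> term_ok V t2 ->
    (eval_term a t1 = eval_term a t2 <-> eval_term b t1 = eval_term b t2).

Definition prof_agree (M N : structure C) B :=
  forall k, (k <= B)%N -> (size_ge M k <-> size_ge N k).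

Lemma good_sym M N V a b : good M N V a b -> good N M V b a.
Proof. by move=> H t1 t2 H1 H2; rewrite (H t1 t2 H1 H2). Qed.

Lemma prof_sym M N B : prof_agree M N B -> prof_agree N M B.
Proof. by move=> H k Hk; rewrite (H k Hk). Qed.

Lemma prof_le M N B B' : prof_agree M N B -> (B' <= B)%N -> prof_agree M N B'.
Proof. move=> H HB k Hk; apply: H; lia. Qed.

Definition rterm (t0 : term C) (x : nat) (t : term C) : term C :=
  match t with TVar y => if y == x then t0 else t | TConst _ => t end.

Lemma rterm_spec (M : structure C) (a : nat -> M) t0 x V t m :
  term_ok V t0 -> term_ok (x :: V) t -> eval_term a t0 = m ->
  term_ok V (rterm t0 x t) /\ eval_term (upd a x m) t = eval_term a (rterm t0 x t).
Proof.
move=> H0; case: t => [y|c] //=; rewrite inE /upd.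
by case: (y == x) => //= Hy <-.
Qed.

Lemma split_t x V t : term_ok (x :: V) t ->
  t = TVar x \/ (term_ok V t /\ forall (M : structure C) (a : nat -> M) m,
     eval_term (upd a x m) t = eval_term a t).
Proof.
case: t => [y|c] /=; last by right.
rewrite inE /upd; case: eqP => [->|_] /= H; [by left | by right].
Qed.

Lemma extend M N V a b x : good M N V a b -> prof_agree M N (size V + n + 1) ->
  forall m : M, exists m' : N, good M N (x :: V) (upd a x m) (upd b x m').
Proof.
move=> Hg Hp m.
case: (classic (exists t0, term_ok V t0 /\ eval_term a t0 = m)) => [[t0 [H0 E0]]|Hno].
- exists (eval_term b t0) => t1 t2 H1 H2.
  have [R1 E1] := rterm_spec _ a t0 x V t1 m H0 H1 E0.
  have [R2 E2] := rterm_spec _ a t0 x V t2 m H0 H2 E0.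
  have [_ F1] := rterm_spec _ b t0 x V t1 _ H0 H1 (erefl _).
  have [_ F2] := rterm_spec _ b t0 x V t2 _ H0 H2 (erefl _).
  by rewrite E1 E2 F1 F2; apply: Hg.
- have [D [HD1 [HD2 [HD3 HD4]]]] := dedup _ _ (eval_term a) (ts V).
  have HsM : size_ge M (size D + 1).
    exists (m :: map (eval_term a) D); split; first by rewrite /= size_map; lia.
    apply/List.NoDup_cons_iff; split=> //.
    move/In_map=> [r [/HD2 /In_ts Hr E]]; apply: Hno; by exists r.
  have Hsz : (size D + 1 <= size V + n + 1)%N by rewrite -size_ts; lia.
  have [L2 [HL2 HN2]] := proj1 (Hp _ Hsz) HsM.
  have [m' [_ Hm']] := pigeon _ _ (map (eval_term b) D) HN2 ltac:(rewrite size_map HL2; lia).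
  have Hnew : forall t, term_ok V t -> eval_term b t <> m'.
    move=> t Ht0 E; have [r [Hr Er]] := HD4 t (proj2 (In_ts V t) Ht0).
    apply: Hm'; apply/In_map; exists r; split=> //.
    have Or : term_ok V r by apply/In_ts; exact: HD2.
    by rewrite -E; apply/(Hg t r Ht0 Or).
  have Hnew' : forall t, term_ok V t -> eval_term a t <> m.
    by move=> t Ht E; apply: Hno; exists t.
  exists m' => t1 t2 H1 H2.
  case: (split_t _ _ _ H1) => [->|[O1 E1]]; case: (split_t _ _ _ H2) => [->|[O2 E2]].
  + by rewrite /= /upd eqxx.
  + rewrite E2 E2 /= /upd eqxx; split=> E; [by exfalso; apply: (Hnew' t2) | by exfalso; apply: (Hnew t2)].
  + rewrite E1 E1 /= /upd eqxx; split=> E; [by exfalso; apply: (Hnew' t1) | by exfalso; apply: (Hnew t1)].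
  + by rewrite E1 E2 E1 E2; apply: Hg.
Qed.

Fixpoint qd (f : form C) : nat :=
  match f with
  | FEq _ _ => 0
  | FNeg g => qd g
  | FAnd g h => maxn (qd g) (qd h)
  | FEx _ g => (qd g).+1
  end.

Lemma EF (f : form C) : forall (M N : structure C) (V : seq nat) (a : nat -> M) (b : nat -> N),
  (forall y, y \in fv f -> y \in V) -> good M N V a b ->
  prof_agree M N (size V + n + qd f) -> (holds a f <-> holds b f).
Proof.
elim: f => [t1 t2|g IH|g IHg h IHh|x g IH] M N V a b Hfv Hg Hp /=.
- clear Hp; apply: Hg.
  + by case: t1 Hfv => [y|c] //= H; apply: H; rewrite inE eqxx.
  + by case: t2 Hfv => [y|c] //= H; apply: H; rewrite mem_cat inE eqxx orbT.
- by rewrite (IH M N V a b Hfv Hg Hp).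
- have Pg : prof_agree M N (size V + n + qd g).
    apply: (prof_le _ _ _ _ Hp); rewrite /= leq_add2l; exact: leq_maxl.
  have Ph : prof_agree M N (size V + n + qd h).
    apply: (prof_le _ _ _ _ Hp); rewrite /= leq_add2l; exact: leq_maxr.
  have Fg : forall y, y \in fv g -> y \in V.
    by move=> y Hy; apply: Hfv; rewrite /= mem_cat Hy.
  have Fh : forall y, y \in fv h -> y \in V.
    by move=> y Hy; apply: Hfv; rewrite /= mem_cat Hy orbT.
  by rewrite (IHg M N V a b Fg Hg Pg) (IHh M N V a b Fh Hg Ph).
- have Hfv' : forall y, y \in fv g -> y \in x :: V.
    move=> y Hy; rewrite inE; case: eqP => //= Hyx; apply: Hfv.
    by rewrite mem_filter Hy andbT; apply/eqP.
  have Hp2 : prof_agree M N (size (x :: V) + n + qd g).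
    by apply: (prof_le _ _ _ _ Hp); rewrite /=; lia.
  split.
  + case=> m Hm.
    have [m' Hm'] := extend _ _ _ _ _ x Hg (prof_le _ _ _ (size V + n + 1) Hp ltac:(rewrite /=; lia)) m.
    exists m'; apply/(IH M N (x :: V) (upd a x m) (upd b x m') Hfv' Hm' Hp2); exact: Hm.
  + case=> m' Hm'.
    have [m Hm] := extend _ _ _ _ _ x (good_sym _ _ _ _ _ Hg) (prof_le _ _ _ (size V + n + 1) (prof_sym _ _ _ Hp) ltac:(rewrite /=; lia)) m'.
    exists m; apply/(IH M N (x :: V) (upd a x m) (upd b x m') Hfv' (good_sym _ _ _ _ _ Hm) Hp2); exact: Hm'.
Qed.

Definition kernel_agree (M N : structure C) :=
  forall c1 c2 : C, interp M c1 = interp M c2 <-> interp N c1 = interp N c2.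

Lemma EF_sent f (M N : structure C) : sentence f -> kernel_agree M N ->
  prof_agree M N (n + qd f) -> (models M f <-> models N f).
Proof.
move=> Hs Hk Hp.
have Hg : forall (a : nat -> M) (b : nat -> N), good M N [::] a b.
  by move=> a b [y|c1] [z|c2] //= _ _; apply: Hk.
have Hfv : forall y, y \in fv f -> y \in [::] by rewrite Hs.
split=> H.
- move=> b; apply/(EF f M N [::] (fun _ => some_elt M) b Hfv (Hg (fun _ => some_elt M) b)); first exact: Hp.
  exact: H.
- move=> a; apply/(EF f M N [::] a (fun _ => some_elt N) Hfv (Hg a (fun _ => some_elt N))); first exact: Hp.
  exact: H.
Qed.

Lemma Th_eq (M N : structure C) : kernel_agree M N -> (forall k, size_ge M k <-> size_ge N k) ->
  Th M = Th N.
Proof.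
move=> Hk Hp; apply: functional_extensionality => f; apply: propositional_extensionality.
rewrite /Th; split; case=> Hs H; split=> //.
- by apply/(EF_sent f M N Hs Hk (fun k _ => Hp k)).
- by apply/(EF_sent f M N Hs Hk (fun k _ => Hp k)).
Qed.

End EF.

Unset Strict Implicit.
Unset Printing Implicit Defensive.

Section Fin.
Variable n : nat.
Notation C := 'I_n.

Definition Uext (M : structure C) : structure C :=
  @Structure C (M + nat)%type (inl (some_elt M)) (fun c => inl (interp M c)).

Lemma Uext_size (M : structure C) k : size_ge (Uext M) k.
Proof.
exists (map inr (iota 0 k)); split; first by rewrite size_map size_iota.
apply: NoDup_map_in; first by apply/NoDup_uniq; exact: iota_uniq.
by move=> x y _ _ [].
Qed.

Lemma Uext_kernel (M : structure C) : kernel_agree n M (Uext M).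
Proof. by move=> c1 c2 /=; split=> [->|[]]. Qed.

Lemma Uext_prof (M : structure C) B : size_ge M B -> prof_agree n M (Uext M) B.
Proof.
move=> H k Hk; split=> _; first exact: Uext_size.
exact: (size_ge_le _ _ _ H Hk).
Qed.

Definition kerR (M : structure C) : rel C := fun c1 c2 =>
  if excluded_middle_informative (interp M c1 = interp M c2) then true else false.

Lemma kerRP (M : structure C) c1 c2 : kerR M c1 c2 <-> interp M c1 = interp M c2.
Proof. by rewrite /kerR; case: excluded_middle_informative. Qed.

Lemma kerR_equiv (M : structure C) : {in [set: C] & &, equivalence_rel (kerR M)}.
Proof.
move=> x y z _ _ _; split; first by apply/kerRP.
move/kerRP=> E; apply/idP/idP => /kerRP H; apply/kerRP; congruence.
Qed.

Definition kerP (M : structure C) := equivalence_partition (kerR M) [set: C].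

Lemma kerP_partition M : partition (kerP M) [set: C].
Proof. exact: equivalence_partitionP (kerR_equiv M). Qed.

Lemma kerP_pblock M c1 c2 : (c2 \in pblock (kerP M) c1) = kerR M c1 c2.
Proof. by rewrite (pblock_equivalence_partition (kerR_equiv M)) ?inE. Qed.

Lemma consistent_same (f1 f2 : form C) (M1 M2 : structure C) :
  sentence f1 -> sentence f2 ->
  models M1 f1 -> size_ge M1 (n + qd n f1) ->
  models M2 f2 -> size_ge M2 (n + qd n f2) ->
  kerP M1 = kerP M2 -> ~ inconsistent2 f1 f2.
Proof.
move=> S1 S2 H1 B1 H2 B2 EP Hinc; apply: (Hinc (Uext M1)); split.
- by apply/(EF_sent n f1 M1 (Uext M1) S1 (Uext_kernel M1) (Uext_prof M1 _ B1)).
- have K : kernel_agree n M2 (Uext M1).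
    move=> c1 c2; rewrite -(Uext_kernel M1) -!kerRP -!kerP_pblock EP; done.
  apply/(EF_sent n f2 M2 (Uext M1) S2 K); last exact: H2.
  move=> k Hk; split=> _; first exact: Uext_size.
  exact: (size_ge_le _ _ _ B2 Hk).
Qed.

Definition canon (s : nat) (f : {ffun C -> 'I_s.+1}) : structure C :=
  @Structure C 'I_s.+1 ord0 (fun c => f c).

Definition canL (B : nat) : seq (theory C) :=
  flatten (map (fun s => map (fun f : {ffun C -> 'I_s.+1} => Th (canon s f))
                              (enum {ffun C -> 'I_s.+1})) (iota 0 B)).

Lemma exact_size_aux (X : Type) B : ~ size_ge X B ->
  exists s, (s < B)%N /\ size_ge X s /\ ~ size_ge X s.+1.
Proof.
elim: B => [|B IH] H; first by exfalso; apply: H; apply: size_ge0.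
case: (classic (size_ge X B)) => HB; first by exists B.
have [s [Hs R]] := IH HB; exists s; split=> //; lia.
Qed.

Lemma small_Th (M : structure C) B : ~ size_ge M B -> List.In (Th M) (canL B).
Proof.
move=> HB; have [s [HsB [[L [HL HN]] Hs1]]] := exact_size_aux M B HB.
have Hall : forall x : M, List.In x L.
  move=> x; apply: NNPP => Hx; apply: Hs1; exists (x :: L); split; first by rewrite /= HL.
  by apply/List.NoDup_cons_iff.
have Hpos : (0 < s)%N by move: (Hall (some_elt M)); rewrite -HL; case: (L).
case: s HsB HL Hs1 Hpos => // s HsB HL Hs1 _.
have Hc : forall c : C, exists i : 'I_s.+1, nth (some_elt M) L i = interp M c.
  move=> c; have [i [Hi Ei]] := List.In_nth _ _ (some_elt M) (Hall (interp M c)).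
  rewrite -size_length HL in Hi; move/ltP: Hi => Hi.
  by exists (Ordinal Hi); rewrite -nth_List.
pose f c := proj1_sig (constructive_indefinite_description _ (Hc c)).
have Hf : forall c, nth (some_elt M) L (f c) = interp M c.
  by move=> c; rewrite /f; case: constructive_indefinite_description.
pose ff := [ffun c => f c].
have -> : Th M = Th (canon s ff).
  apply: Th_eq.
  - move=> c1 c2 /=; rewrite !ffunE -!Hf; split; last by move->.
    move=> E; apply: val_inj; rewrite -!nth_List in E.
    apply: (proj1 (List.NoDup_nth L (some_elt M)) HN _ _ _ _ E);
      apply/ltP; rewrite -size_length HL; exact: ltn_ord.
  - move=> k; rewrite /= size_ge_fin card_ord; split.
    + case=> L' [<- HN']; rewrite -HL !size_length; apply/leP; apply: List.NoDup_incl_length => // x _.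
    + by move=> Hk; apply: (size_ge_le _ _ _ (ex_intro _ L (conj HL HN)) Hk).
apply/In_flatten; eexists; split.
  apply/In_map; exists s; split; last by reflexivity.
  by apply/InE; rewrite mem_iota; lia.
apply/In_map; exists ff; split=> //; apply/InE; by rewrite mem_enum.
Qed.

Lemma big_model (f : form C) : ~ fam_finite (subfam (@T_Sigma C) f) ->
  exists M : structure C, models M f /\ size_ge M (n + qd n f).
Proof.
move=> Hinf; apply: NNPP => Hno; apply: Hinf; exists (canL (n + qd n f)).
move=> T [[M ->] [Hs Hm]]; apply: small_Th => Hsz; apply: Hno; by exists M.
Qed.

Definition partset := [set P : {set {set 'I_n}} | partition P [set: 'I_n]].

Lemma bound_m m (phi : 'I_m -> form C) :
  (forall i, sentence (phi i)) -> (forall i j, i <> j -> inconsistent2 (phi i) (phi j)) ->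
  (forall i, ~ fam_finite (subfam (@T_Sigma C) (phi i))) -> (m <= #|partset|)%N.
Proof.
move=> Hs Hinc Hinf.
pose Mi i := proj1_sig (constructive_indefinite_description _ (big_model _ (Hinf i))).
have HM : forall i, models (Mi i) (phi i) /\ size_ge (Mi i) (n + qd n (phi i)).
  by move=> i; rewrite /Mi; case: constructive_indefinite_description.
pose Pf i := kerP (Mi i).
have Pinj : injective Pf.
  move=> i j E; apply: NNPP => Hij.
  have [H1 B1] := HM i; have [H2 B2] := HM j.
  exact: (consistent_same _ _ _ _ (Hs i) (Hs j) H1 B1 H2 B2 E (Hinc i j Hij)).
have sub : Pf @: [set: 'I_m] \subset partset.
  apply/subsetP=> P /imsetP [i _ ->]; rewrite inE; exact: kerP_partition.
by have := subset_leq_card sub; rewrite card_imset // cardsT card_ord.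
Qed.

Lemma fam_finite_sub (F G : theory C -> Prop) : (forall T, F T -> G T) -> fam_finite G -> fam_finite F.
Proof. by move=> H [l Hl]; exists l => T /H /Hl. Qed.

Lemma RS1_inv (G : theory C -> Prop) : RSge_nat 1 G -> ~ fam_finite G.
Proof.
move=> H; inversion H; subst.
- by exfalso; apply: (H0 0).
- done.
- exfalso; case: H0 => Hb _; apply: H1 => c; rewrite /=; lia.
- exfalso; case: H0 => _; apply; exists 0; split=> // [[c]] /=; lia.
Qed.

Lemma RS2_inv (G : theory C -> Prop) : RSge_nat 2 G -> exists phi : nat -> form C,
  (forall k, sentence (phi k)) /\ (forall k l, k <> l -> inconsistent2 (phi k) (phi l)) /\
  (forall k, RSge_nat 1 (subfam G (phi k))).
Proof.
move=> H; inversion H; subst.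
- by exfalso; apply: (H0 0).
- exfalso; case: H0 => b [Hb [Hb2 Hn]].
  have b0 : b = 0 by case: b Hb Hb2 Hn => // b Hb; exfalso; apply: (Hb 0).
  subst b; apply: Hn; exists 1; split=> //.
- case: H0 => Hb Hn.
  have b1 : b = 1.
    case: b Hb Hn H1 H2 => [|[|b]] //= Hb Hn H1 H2.
    + by exfalso; apply: H1 => c; rewrite /=; lia.
  rewrite b1 in H2; exact: H2.
- exfalso; case: H0 => _; apply; exists 1; split=> // [[c]] /=; lia.
Qed.

Lemma not_RS2 (G : theory C -> Prop) : (forall T, G T -> T_Sigma T) -> ~ RSge_nat 2 G.
Proof.
move=> HG /RS2_inv [phi [Hs [Hinc H1]]].
have := bound_m #|partset|.+1 (fun i => phi (val i)) (fun i => Hs _)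
  (fun i j Hij => Hinc _ _ (fun E => Hij (val_inj E))).
move=> Hb; have : false; last by [].
rewrite -(ltnn #|partset|); apply: Hb => i.
move: (RS1_inv _ (H1 (val i))) => Hinf Hfin; apply: Hinf.
apply: (fam_finite_sub _ _ _ Hfin) => T [HT HP]; split=> //; exact: HG.
Qed.

End Fin.

Unset Strict Implicit.
Unset Printing Implicit Defensive.

Section Delta.
Variable C : Type.

Definition exs (l : seq nat) (g : form C) : form C := foldr (fun x h => FEx x h) g l.

Lemma holds_exs_r (M : structure C) (l : seq nat) (g : form C) : forall (a a' : nat -> M),
  (forall y, y \notin l -> a' y = a y) -> holds a' g -> holds a (exs l g).
Proof.
elim: l => [|x l IH] a a' Ha Hg /=.
  have -> : a = a' by apply: functional_extensionality => y; rewrite Ha.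
  done.
exists (a' x); apply: (IH _ a') => // y Hy; rewrite /upd; case: eqP => [->//|Hyx].
by apply: Ha; rewrite inE negb_or Hy andbT; apply/eqP.
Qed.

Lemma holds_exs_l (M : structure C) (l : seq nat) (g : form C) : forall (a : nat -> M),
  holds a (exs l g) -> exists a' : nat -> M, holds a' g.
Proof.
elim: l => [|x l IH] a /=; first by move=> H; exists a.
by case=> m /IH.
Qed.

Lemma fv_exs l (g : form C) y : y \in fv (exs l g) -> y \in fv g /\ y \notin l.
Proof.
elim: l => [|x l IH] //=; rewrite mem_filter => /andP [Hyx /IH [H1 H2]].
by split=> //; rewrite inE negb_or Hyx.
Qed.

Fixpoint body (m : nat) : form C :=
  match m with
  | 0 => FT C
  | m'.+1 => FAnd (body m') (bigand [seq FNeg (FEq (TVar m') (TVar j)) | j <- iota 0 m'])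
  end.

Lemma holds_body (M : structure C) (a : nat -> M) m :
  holds a (body m) <-> forall i j, (j < i < m)%N -> a i <> a j.
Proof.
elim: m => [|m IH] /=.
  by split=> [_ i j|_]; [lia | apply: holds_FT].
rewrite holds_bigand IH; split.
- case=> H1 H2 i j /andP [Hji Him].
  case: (ltngtP i m) => Hi.
  + by apply: H1; rewrite Hji.
  + lia.
  + subst i; apply: (H2 (FNeg (FEq (TVar m) (TVar j)))).
    by apply/In_map; exists j; split=> //; apply/InE; rewrite mem_iota.
- move=> H; split.
  + move=> i j /andP [H1 H2]; apply: H; rewrite H1 /=; lia.
  + move=> f /In_map [j [/InE Hj ->]] /=; apply: H.
    rewrite mem_iota in Hj; apply/andP; split; lia.
Qed.

Lemma fv_bigand_in (l : seq (form C)) y : y \in fv (bigand l) -> exists f, List.In f l /\ y \in fv f.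
Proof.
elim: l => [|f l IH] //=; rewrite mem_cat => /orP [H|/IH [g [Hg Hy]]].
  by exists f; split=> //; left.
by exists g; split=> //; right.
Qed.

Lemma fv_body m y : y \in fv (body m) -> (y < m)%N.
Proof.
elim: m => [|m IH] //=.
rewrite mem_cat => /orP [/IH|/fv_bigand_in [f [/In_map [j [/InE Hj ->]] Hy]]]; first lia.
rewrite mem_iota in Hj; move: Hy; rewrite /= !inE => /orP [/eqP ->|/eqP ->]; lia.
Qed.

Definition delta m : form C := exs (iota 0 m) (body m).

Lemma delta_sentence m : sentence (delta m).
Proof.
rewrite /sentence; case E: (fv (delta m)) => [|y s] //.
have : y \in fv (delta m) by rewrite E inE eqxx.
move/fv_exs => [/fv_body H1]; rewrite mem_iota /=; lia.
Qed.

Lemma models_delta (M : structure C) m : models M (delta m) <-> size_ge M m.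
Proof.
split.
- move=> /(_ (fun _ => some_elt M)) /holds_exs_l [a' /holds_body H].
  exists (map a' (iota 0 m)); split; first by rewrite size_map size_iota.
  apply: NoDup_map_in; first by apply/NoDup_uniq; exact: iota_uniq.
  move=> x y /InE Hx /InE Hy E; rewrite !mem_iota /= in Hx Hy.
  case: (ltngtP x y) => Hxy //.
  + by exfalso; apply: (H y x); [rewrite Hxy /=; lia | rewrite E].
  + by exfalso; apply: (H x y); [rewrite Hxy /=; lia | rewrite E].
- case=> L [HL HN] a.
  pose a' y := if (y < m)%N then nth (some_elt M) L y else a y.
  apply: (holds_exs_r _ _ _ a a').
    by move=> y; rewrite mem_iota /= /a'; case: ifP => //; lia.
  apply/holds_body => i j /andP [Hji Him]; rewrite /a'.
  have Hj : (j < m)%N by lia.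
  rewrite Him Hj -!nth_List => E.
  have := proj1 (List.NoDup_nth L (some_elt M)) HN i j.
  rewrite -size_length HL => /(_ (elimT ltP Him) (elimT ltP Hj) E); lia.
Qed.


End Delta.

Unset Strict Implicit.
Unset Printing Implicit Defensive.

Section Part1.
Variable n : nat.
Notation C := 'I_n.

Definition pform (P : {set {set C}}) (c : C * C) : form C :=
  if c.2 \in pblock P c.1 then FEq (TConst c.1) (TConst c.2)
  else FNeg (FEq (TConst c.1) (TConst c.2)).

Definition psiP (P : {set {set C}}) : form C := bigand [seq pform P c | c <- enum {: C * C}].

Lemma holds_psiP (M : structure C) (a : nat -> M) P :
  holds a (psiP P) <-> forall c1 c2, (interp M c1 = interp M c2 <-> c2 \in pblock P c1).
Proof.
rewrite holds_bigand; split.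
- move=> H c1 c2.
  have Hin : List.In (pform P (c1, c2)) [seq pform P c | c <- enum {: C * C}].
    by apply/In_map; exists (c1, c2); split=> //; apply/InE; rewrite mem_enum.
  have := H _ Hin; rewrite /pform /=; case: (c2 \in pblock P c1) => //= H'.
- move=> H f /In_map [[c1 c2] [_ ->]]; rewrite /pform /=.
  case E: (c2 \in pblock P c1) => /=; first by apply/H.
  by move/H; rewrite E.
Qed.

Lemma psiP_sentence P : sentence (psiP P).
Proof.
by rewrite /sentence fv_bigand // => f /In_map [c [_ ->]]; rewrite /pform; case: ifP.
Qed.

Definition SP (P : {set {set C}}) (k : nat) : structure C :=
  @Structure C ({set C} + 'I_k.+1)%type (inr ord0) (fun c => inl (pblock P c)).

Lemma SP_psiP P k : partition P [set: C] -> models (SP P k) (psiP P).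
Proof.
case/and3P=> /eqP Hcov Htriv _ a; apply/holds_psiP => c1 c2 /=.
rewrite -eq_pblock ?Hcov ?inE //; split; first by case=> ->.
by move/eqP->.
Qed.

Lemma size_SP P k m : size_ge (SP P k) m <-> (m <= #|{: {set C}}| + k.+1)%N.
Proof.
by rewrite (size_ge_fin ({set C} + 'I_k.+1)%type m) card_sum card_ord.
Qed.

Lemma SP_inj P k l : (k < l)%N -> Th (SP P k) <> Th (SP P l).
Proof.
move=> Hkl E.
have : Th (SP P l) (delta C (#|{: {set C}}| + l.+1)).
  by split; [exact: delta_sentence | apply/models_delta/size_SP].
rewrite -E => [[_ /models_delta /size_SP]]; lia.
Qed.

Lemma RS1_of_inf (G : theory C -> Prop) : ~ fam_finite G -> RSge_nat 1 G.
Proof.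
move=> H; apply: RSge_one => //; exists 0; split; first by move=> b; lia.
by split=> // [[c]]; lia.
Qed.

Lemma part_eq P Q : partition P [set: C] -> partition Q [set: C] ->
  (forall c1 c2, (c2 \in pblock P c1) = (c2 \in pblock Q c1)) -> P = Q.
Proof.
move=> HP HQ H.
rewrite -(equivalence_partition_pblock HP) -(equivalence_partition_pblock HQ).
have E : (fun x y => y \in pblock P x) = (fun x y => y \in pblock Q x).
  by do 2 (apply: functional_extensionality => ?); apply: H.
by rewrite E.
Qed.

Lemma part1 : RS_eq_nat 1 (@T_Sigma C) /\ ds_eq_nat 1 (@T_Sigma C) (num_partitions n).
Proof.
have NR2 : forall G : theory C -> Prop, (forall T, G T -> T_Sigma T) -> ~ RSge_nat 2 G.
  exact: not_RS2.
split.
  split; last by apply: NR2.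
  apply: RS1_of_inf; apply: (not_finite_of_inj (f := fun k => Th (SP set0 k))).
    by move=> k; eexists.
  by move=> k l; apply: SP_inj.
split.
- exists (fun i : 'I_#|partset n| => psiP (enum_val i)); split; first by move=> i; apply: psiP_sentence.
  split.
  + move=> i j Hij M [/(_ (fun _ => some_elt M)) /holds_psiP H1 /(_ (fun _ => some_elt M)) /holds_psiP H2].
    apply: Hij; apply: enum_val_inj; apply: part_eq.
    * by move: (enum_valP i); rewrite inE.
    * by move: (enum_valP j); rewrite inE.
    * move=> c1 c2; apply/idP/idP => Hc.
      - by apply/(H2 c1 c2); apply/(H1 c1 c2).
      - by apply/(H1 c1 c2); apply/(H2 c1 c2).
  + move=> i; have HP : partition (enum_val i) [set: C] by move: (enum_valP i); rewrite inE.
    split; last by apply: NR2 => T [].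
    apply: RS1_of_inf; apply: (not_finite_of_inj (f := fun k => Th (SP (enum_val i) k))).
      move=> k; split; first by eexists.
      by split; [exact: psiP_sentence | exact: SP_psiP].
    by move=> k l; apply: SP_inj.
- move=> m phi Hs Hinc Hrs; apply: bound_m => // i.
  by apply: RS1_inv; case: (Hrs i).
Qed.

End Part1.

Theorem proposition2p4 :
  (forall n : nat,
     RS_eq_nat 1 (@T_Sigma 'I_n) /\
     ds_eq_nat 1 (@T_Sigma 'I_n) (num_partitions n)) /\
  (forall C : Type,
     ~ (exists l : list C, forall c : C, List.In c l) ->
     RS_infty (@T_Sigma C)).
Proof.
split; first exact: part1.
move=> C HC; exact: part2.
Qed.
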